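(* Assume the setting described in the context. Let $\lambda\in\mathbb{R}^F$ satisfy $$\lambda_f\ge\sum_{\sigma\in f:\,\sigma'\in A(f,\sigma)}\rho(\sigma'\mid f,\sigma)\frac{\omega(\sigma)}{\omega(\sigma')}\quad\text{for all }f\in F,\ \sigma'\in\Omega.$$ Then for every word $W$ and every state $\sigma\in\Omega$: $$\sum_{\tau:\ \text{word }W,\ \text{last state }\sigma}p(\tau)\le\gamma^{\mathrm{init}}\lambda_W\,\omega(\sigma),\qquad\sum_{\tau:\ \text{word }W}p(\tau)\le\gamma^{\mathrm{init}}\lambda_W,$$ where the sums range over walks $\tau$ with the indicated word (and, in the first sum, with last state $\sigma$).
   Context: Setting: $\Omega$ is a finite set and $F$ a finite set of flaws, each a nonempty subset of $\Omega$; $F_\sigma=\{f:\sigma\in f\}$. For $\sigma\in\Omega$ and $f\in F_\sigma$ there is a probability distribution $\rho(\cdot\mid f,\sigma)$ on $\Omega$ with support $A(f,\sigma)$. $\omega$ is a probability distribution on $\Omega$ with $\omega(\sigma)>0$ for all $\sigma$, and $\omega^{\mathrm{init}}$ is a probability distribution on $\Omega$. Set $\gamma^{\mathrm{init}}=\max_\sigma\omega^{\mathrm{init}}(\sigma)/\omega(\sigma)$. A walk is $\tau=\sigma_1\xrightarrow{w_1}\sigma_2\cdots\xrightarrow{w_t}\sigma_{t+1}$ with $w_i\in F_{\sigma_i}$ and $\sigma_{i+1}\in A(w_i,\sigma_i)$; the walk with $t=0$ consists of a single state. Its word is $w_1\ldots w_t$, and $p(\tau)=\omega^{\mathrm{init}}(\sigma_1)\prod_{i=1}^t\rho(\sigma_{i+1}\mid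 w_i,\sigma_i)$. For a word $W=w_1\ldots w_t$, $\lambda_W=\prod_i\lambda_{w_i}$. *)

(* Defs.v *)
From mathcomp Require Import all_boot all_order all_algebra.
Set Implicit Arguments. Unset Strict Implicit. Unset Printing Implicit Defensive.
Import Order.TTheory GRing.Theory Num.Theory.
Local Open Scope ring_scope.

Section Walks.
Variables (R : realFieldType) (Omega : finType).

Definition is_distr (mu : Omega -> R) : Prop :=
  (forall x, 0 <= mu x) /\ \sum_(x : Omega) mu x = 1.

(* rho f s s' = rho(s' | f, s);  support A(f,s) *)
Variable rho : {set Omega} -> Omega -> Omega -> R.

Definition A (f : {set Omega}) (s : Omega) : {set Omega} :=
  [set s' | 0 < rho f s s'].

Definition is_walk (F : {set {set Omega}}) (W : seq {set Omega})
  (st : {ffun 'I_(size W).+1 -> Omega}) : bool :=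
  [forall i : 'I_(size W),
     let w := nth set0 W i in
     [&& w \in F, st (inord i) \in w & st (inord i.+1) \in A w (st (inord i))]].

Definition walk_prob (winit : Omega -> R) (W : seq {set Omega})
  (st : {ffun 'I_(size W).+1 -> Omega}) : R :=
  winit (st ord0) *
  \prod_(i < size W) rho (nth set0 W i) (st (inord i)) (st (inord i.+1)).

Definition walk_last (W : seq {set Omega})
  (st : {ffun 'I_(size W).+1 -> Omega}) : Omega := st ord_max.

Definition gamma_init (omega winit : Omega -> R) : R :=
  \big[Num.max/0]_(s : Omega) (winit s / omega s).

Definition lambdaW (lambda : {set Omega} -> R) (W : seq {set Omega}) : R :=
  \prod_(f <- W) lambda f.

End Walks.

(* Main.v *)
Require Import Defs.
From mathcomp Require Import all_boot all_order all_algebra zify ring.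
Import Order.TTheory GRing.Theory Num.Theory.
Local Open Scope ring_scope.
Set Implicit Arguments. Unset Strict Implicit.

Section Aux.
Variables (R : realFieldType) (T : finType).

Definition ext n (st : {ffun 'I_n.+1 -> T}) (x : T) : {ffun 'I_n.+2 -> T} :=
  [ffun i => if unlift ord_max i is Some j then st j else x].
Definition restr n (st : {ffun 'I_n.+2 -> T}) : {ffun 'I_n.+1 -> T} :=
  [ffun j => st (lift ord_max j)].

Lemma ext_bij n : bijective (fun p : {ffun 'I_n.+1 -> T} * T => ext p.1 p.2).
Proof.
exists (fun st => (restr st, st ord_max)).
- case=> st x /=; congr pair.
  + by apply/ffunP=> j; rewrite !ffunE liftK.
  + by rewrite ffunE unlift_none.
- move=> st; apply/ffunP=> i; rewrite !ffunE; case: unliftP => [j ->|->] //.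
  by rewrite ffunE.
Qed.

Lemma sum_split n (G : {ffun 'I_n.+2 -> T} -> R) :
  \sum_(st : {ffun 'I_n.+2 -> T}) G st =
  \sum_(st : {ffun 'I_n.+1 -> T}) \sum_(x : T) G (ext st x).
Proof.
rewrite (reindex (fun p : {ffun 'I_n.+1 -> T} * T => ext p.1 p.2)) /=;
  last exact/onW_bij/ext_bij.
by rewrite pair_bigA.
Qed.

Lemma extE n st x (i : 'I_n.+2) :
  ext st x i = if (i < n.+1)%N then st (inord i) else x.
Proof.
rewrite ffunE; case: unliftP => [j ->|->] /=.
- have -> : ((lift ord_max j : nat) < n.+1)%N by rewrite lift_max.
  congr (st _); apply/val_inj=> /=; rewrite /bump leqNgt ltn_ord add0n inordK //; exact: (ltn_trans (ltn_ord j)).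
- by rewrite ltnn.
Qed.

Lemma ext_inord n (st : {ffun 'I_n.+1 -> T}) x (i : nat) : (i <= n.+1)%N ->
  ext st x (inord i) = if (i < n.+1)%N then st (inord i) else x.
Proof. by move=> hi; rewrite extE inordK. Qed.

Lemma ord_max_inord n : (ord_max : 'I_n.+1) = inord n.
Proof. by apply/val_inj; rewrite /= inordK. Qed.


Variables (F : {set {set T}}) (rho : {set T} -> T -> T -> R)
  (omega winit : T -> R) (lambda : {set T} -> R) (g : R).
Hypothesis rho_ge0 : forall f s s', f \in F -> s \in f -> 0 <= rho f s s'.
Hypothesis F_ne : forall f, f \in F -> f != set0.
Hypothesis om_gt0 : forall s, 0 < omega s.
Hypothesis g_ge0 : 0 <= g.
Hypothesis winit_le : forall s, winit s <= g * omega s.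
Hypothesis lam_hyp : forall f s', f \in F ->
     \sum_(s in f | s' \in A rho f s) rho f s s' * (omega s / omega s')
       <= lambda f.

Lemma lam_ge0 f : f \in F -> 0 <= lambda f.
Proof.
move=> fF; have /set0Pn [s _] := F_ne fF.
apply: le_trans (lam_hyp s fF); apply: sumr_ge0 => s0 /andP[s0f _].
by apply: mulr_ge0; [exact: rho_ge0|apply: divr_ge0; apply: ltW].
Qed.

Definition walkP n (w : nat -> {set T}) (st : {ffun 'I_n.+1 -> T}) : bool :=
  [forall i : 'I_n, [&& w i \in F, st (inord i) \in w i &
      st (inord i.+1) \in A rho (w i) (st (inord i))]].
Definition prob n (w : nat -> {set T}) (st : {ffun 'I_n.+1 -> T}) : R :=
  winit (st ord0) * \prod_(i < n) rho (w i) (st (inord i)) (st (inord i.+1)).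

Lemma walkP_ext n w (st : {ffun 'I_n.+1 -> T}) x :
  walkP w (ext st x) = walkP w st &&
    [&& w n \in F, st ord_max \in w n & x \in A rho (w n) (st ord_max)].
Proof.
rewrite ord_max_inord.
apply/forallP/andP.
- move=> H; split.
  + apply/forallP=> i; have := H (widen_ord (leqnSn n) i).
    have hi := ltn_ord i.
    have h1 : (i < n.+1)%N by lia. have h2 : (i.+1 < n.+1)%N by lia.
    by rewrite /= !ext_inord ?h1 ?h2 //; lia.
  + have := H ord_max.
    by rewrite /= !ext_inord ?ltnS ?leqnn ?ltnn //; lia.
- case=> /forallP H1 H2 i; have hi := ltn_ord i.
  have h1 : (i < n.+1)%N by lia.
  rewrite /= !ext_inord ?h1 ?ltnS; try lia.
  case: (ltnP i n) => hin.
  + by have := H1 (Ordinal hin).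
  + have ein : (i : nat) = n by apply/eqP; rewrite eqn_leq hin -ltnS hi.
    by rewrite ein.
Qed.

Lemma prob_ext n w (st : {ffun 'I_n.+1 -> T}) x :
  prob w (ext st x) = prob w st * rho (w n) (st ord_max) x.
Proof.
rewrite /prob big_ord_recr /= ord_max_inord !ext_inord ?ltnS ?leqnn ?ltnn //; try lia.
rewrite mulrA; congr (_ * _ * _).
- by congr winit; rewrite extE /=; congr (st _); apply/val_inj; rewrite /= inordK.
- apply: eq_bigr => i _; have hi := ltn_ord i.
  have h1 : (i < n.+1)%N by lia. have h2 : (i.+1 < n.+1)%N by lia.
  by rewrite /= !ext_inord ?h1 ?h2 //; lia.
Qed.

Lemma qbound n (w : nat -> {set T}) : (forall i, (i < n)%N -> w i \in F) ->
  forall s, \sum_(st : {ffun 'I_n.+1 -> T} | walkP w st && (st ord_max == s))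
     prob w st <= g * \prod_(i < n) lambda (w i) * omega s.
Proof.
elim: n w => [|n IH] w hF s'.
  rewrite (reindex (fun x : T => [ffun _ : 'I_1 => x])) /=; last first.
    apply/onW_bij; exists (fun st : {ffun 'I_1 -> T} => st ord0) => [x|st].
      by rewrite ffunE.
    by apply/ffunP => i; rewrite ffunE (ord1 i).
  rewrite (eq_bigl (pred1 s')) => [|x]; last first.
    have -> : walkP w [ffun _ : 'I_1 => x] = true by apply/forallP => -[].
    by rewrite ffunE.
  by rewrite big_pred1_eq /prob ffunE !big_ord0 !mulr1.
have hwn : w n \in F by apply: hF.
rewrite big_mkcond sum_split.
rewrite (eq_bigr (fun st => if walkP w st && [&& w n \in F, st ord_max \in w n
     & s' \in A rho (w n) (st ord_max)] then prob w st * rho (w n) (st ord_max) s' else 0));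
  last first.
  move=> st _; rewrite (bigD1 s') //= big1 => [|x /negPf xs].
  - by rewrite walkP_ext prob_ext extE /= ltnn eqxx andbT addr0.
  - by rewrite walkP_ext extE /= ltnn xs andbF.
rewrite (partition_big (fun st : {ffun 'I_n.+1 -> T} => st ord_max) predT) //=.
apply: le_trans (_ : \sum_y (if (y \in w n) && (s' \in A rho (w n) y) then
   rho (w n) y s' * (g * \prod_(i < n) lambda (w i) * omega y) else 0) <= _).
  apply: ler_sum => y _.
  case C: ((y \in w n) && (s' \in A rho (w n) y)).
  + rewrite (eq_bigr (fun st => (if walkP w st then prob w st else 0) * rho (w n) y s'));
      last first.
      move=> st /eqP ->; rewrite hwn /= C andbT; by case: walkP; rewrite ?mul0r.
    rewrite -big_distrl /= -big_mkcondl mulrC.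
    apply: ler_wpM2l; first by apply: rho_ge0 => //; case/andP: C.
    exact: IH (fun i hi => hF i (ltnW hi)) y.
  + rewrite big1 // => st /eqP ->; by rewrite hwn /= C andbF.
rewrite -big_mkcond /=.
have hL : 0 <= \prod_(i < n) lambda (w i).
  apply: prodr_ge0 => i _; apply: lam_ge0; apply: hF; exact: (ltnW (ltn_ord i)).
have om0 := om_gt0 s'.
rewrite (eq_bigr (fun y => (g * \prod_(i < n) lambda (w i) * omega s') *
   (rho (w n) y s' * (omega y / omega s')))) => [|y _]; last first.
  by field; exact: lt0r_neq0.
rewrite -mulr_sumr.
apply: le_trans (ler_wpM2l _ (lam_hyp s' hwn)) _.
  by apply: mulr_ge0; [apply: mulr_ge0|apply: ltW].
rewrite big_ord_recr /=.
set L := \prod_(i < n) lambda (w i).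
have -> : g * L * omega s' * lambda (w n) = g * (L * lambda (w n)) * omega s' by ring.
exact: lexx.
Qed.

End Aux.

Lemma bigmax_ge (R : realFieldType) (I : eqType) (r : seq I) (G : I -> R) i :
  i \in r -> G i <= \big[Num.max/0]_(j <- r) G j.
Proof.
elim: r => // a r IHr; rewrite inE big_cons => /orP[/eqP ->|/IHr h].
  by rewrite le_max lexx.
by rewrite le_max h orbT.
Qed.

Lemma bigmax_ge0 (R : realFieldType) (I : eqType) (r : seq I) (G : I -> R) :
  0 <= \big[Num.max/0]_(j <- r) G j.
Proof.
elim: r => [|a r IHr]; first by rewrite big_nil.
by rewrite big_cons le_max IHr orbT.
Qed.

Theorem lemma1 (R : realFieldType) (Omega : finType)
  (F : {set {set Omega}})
  (rho : {set Omega} -> Omega -> Omega -> R)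
  (omega winit : Omega -> R) (lambda : {set Omega} -> R) :
  (forall f, f \in F -> f != set0) ->
  (forall f s, f \in F -> s \in f -> is_distr (rho f s)) ->
  is_distr omega -> (forall s, 0 < omega s) ->
  is_distr winit ->
  (forall f s', f \in F ->
     \sum_(s in f | s' \in A rho f s) rho f s s' * (omega s / omega s')
       <= lambda f) ->
  forall W : seq {set Omega}, all (fun f => f \in F) W ->
  (forall s : Omega,
     \sum_(st : {ffun 'I_(size W).+1 -> Omega}
            | is_walk rho F st && (walk_last st == s)) walk_prob rho winit st
       <= gamma_init omega winit * lambdaW lambda W * omega s) /\
  \sum_(st : {ffun 'I_(size W).+1 -> Omega} | is_walk rho F st)
      walk_prob rho winit st
    <= gamma_init omega winit * lambdaW lambda W.
Proof.
move=> F_ne rho_d [_ om1] om_gt0 [wi0 _] lam_hyp W hW.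
set g := gamma_init omega winit.
have g0 : 0 <= g by apply: bigmax_ge0.
have wle : forall s, winit s <= g * omega s.
  move=> s; have h : winit s / omega s <= g.
    by apply: (bigmax_ge (fun s => winit s / omega s)); rewrite mem_index_enum.
  have om := om_gt0 s.
  by rewrite -ler_pdivrMr.
have rho0 : forall f s s', f \in F -> s \in f -> 0 <= rho f s s'.
  by move=> f s s' fF sf; case: (rho_d f s fF sf) => h _; exact: h.
have hF : forall i, (i < size W)%N -> nth set0 W i \in F.
  by move=> i hi; exact: (all_nthP set0 hW).
have hL : lambdaW lambda W = \prod_(i < size W) lambda (nth set0 W i).
  by rewrite /lambdaW (big_nth set0) big_mkord.
have Q := qbound rho0 F_ne om_gt0 g0 wle lam_hyp hF.
have part1 : forall s : Omega,
     \sum_(st : {ffun 'I_(size W).+1 -> Omega}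
            | is_walk rho F st && (walk_last st == s)) walk_prob rho winit st
       <= g * lambdaW lambda W * omega s.
  by move=> s; rewrite hL; exact: (Q s).
split=> //.
rewrite (partition_big (fun st : {ffun 'I_(size W).+1 -> Omega} => walk_last st) predT) //=.
apply: le_trans (ler_sum _ (fun s _ => part1 s)) _.
by rewrite -mulr_sumr om1 mulr1.
Qed.
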